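(* Let $(V,\varphi,\xi,\eta,g)$, $\mathcal{F}$, $W_2$, $q_1,q_2$ be as in the context, and let $F\in W_2$ with associated operator $\mathcal{A}_\xi$. Then: (i) $F=q_1F$ if and only if $\mathcal{A}_\xi\circ\varphi=\varphi\circ\mathcal{A}_\xi$; (ii) $F=q_1F$ if and only if $F(X,Y,Z)=-F(\varphi X,\varphi Y,Z)-F(\varphi X,Y,\varphi Z)$ for all $X,Y,Z\in V$; (iii) $F=q_2F$ if and only if $\mathcal{A}_\xi\circ\varphi=-\varphi\circ\mathcal{A}_\xi$; (iv) $F=q_2F$ if and only if $F(X,Y,Z)=F(\varphi X,\varphi Y,Z)+F(\varphi X,Y,\varphi Z)$ for all $X,Y,Z\in V$.
   Context: Let $V$ be a real vector space of dimension $2n+1$ with an endomorphism $\varphi$, a vector $\xi$ and a linear form $\eta$ such that $\varphi\xi=0$, $\eta\circ\varphi=0$, $\eta(\xi)=1$, $\varphi^2=\mathrm{id}-\eta\otimes\xi$, and such that $\varphi$ restricted to $\mathbb{D}=\ker\eta$ has eigenvalues $\pm1$ with eigenspaces of equal dimension $n$. Let $g$ be a nondegenerate symmetric bilinear form on $V$ with $g(\varphi X,\varphi Y)=-g(X,Y)+\eta(X)\eta(Y)$; then $\eta(X)=g(X,\xi)$. Write $hX=X-\eta(X)\xi$. Fix a basis $\{e_1,\dots,e_{2n}\}$ of $\mathbb{D}$ and write $Y=Y^ie_i+\eta(Y)\xi$. Let $\mathcal{F}$ be the vector space of all $(0,3)$-tensors of the form $F(X,Y,Z)=Y^ig(\mathcal{A}_{e_i}X,Z)+\eta(Y)g(\mathcal{A}_\xi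 X,\varphi Z)$, where $\mathcal{A}_{e_i}:V\to V$ and $\mathcal{A}_\xi:V\to\mathbb{D}$ are linear maps satisfying for all $X$, $i,j$: $g(\mathcal{A}_{e_i}X,e_j)=-g(\mathcal{A}_{e_j}X,e_i)$; $\mathcal{A}_{\varphi e_i}X=-\varphi(\mathcal{A}_{e_i}X)-g(\mathcal{A}_\xi X,e_i)\xi$ (index extended linearly); $\eta(\mathcal{A}_{e_i}X)=-g(\mathcal{A}_\xi X,\varphi e_i)$; $\eta(\mathcal{A}_\xi X)=0$. These operators are determined by $F$ (e.g. $\mathcal{A}_\xi X\in\mathbb{D}$ is characterized by $g(\mathcal{A}_\xi X,\varphi Z)=F(X,\xi,Z)$ for all $Z$); $\mathcal{A}_\xi$ is called the operator associated with $F$. Let $p_2(F)(X,Y,Z)=-\eta(Y)F(hX,hZ,\xi)+\eta(Z)F(hX,hY,\xi)$ and $W_2=\{F\in\mathcal{F}:F=p_2F\}$; every $F\in W_2$ has the form $F(X,Y,Z)=-\eta(Y)g(\varphi(\mathcal{A}_\xi X),Z)+\eta(Z)g(\varphi(\mathcal{A}_\xi X),Y)$ with $\mathcal{A}_\xi\xi=0$. For $F\in W_2$ with associated operator $A=\mathcal{A}_\xi$, define $q_1(F)(X,Y,Z)=-\tfrac12\eta(Y)\{g(\varphi(AX),Z)+g(A(\varphi X),Z)\}+\tfrac12\eta(Z)\{g(\varphi(AX),Y)+g(A(\varphi X),Y)\}$, $q_2(F)(X,Y,Z)=-\tfrac12\eta(Y)\{g(\varphi(AX),Z)-g(A(\varphi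 X),Z)\}+\tfrac12\eta(Z)\{g(\varphi(AX),Y)-g(A(\varphi X),Y)\}$. *)

(* Defs.v *)
(* V is modelled as row vectors 'rV[R]_(2n+1) over R : realType;
   linear endomorphisms act on the right (X |-> X *m M). *)
From HB Require Import structures.
From mathcomp Require Import all_boot all_order all_algebra.
From mathcomp Require Import reals.
Set Implicit Arguments. Unset Strict Implicit. Unset Printing Implicit Defensive.
Import Order.TTheory GRing.Theory Num.Theory.
Local Open Scope ring_scope.

Notation vecV R n := 'rV[R]_(n.*2.+1).
Notation endV R n := 'M[R]_(n.*2.+1).

Section Defs.
Variables (R : realType) (n : nat).
Variables (phi : endV R n) (xi : vecV R n) (eta : 'cV[R]_(n.*2.+1)) (g : endV R n).

Definition etaf (X : vecV R n) : R := (X *m eta) 0 0.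
Definition bil (X Y : vecV R n) : R := (X *m g *m Y^T) 0 0.
Definition hproj (X : vecV R n) : vecV R n := X - etaf X *: xi.

Definition is_structure : Prop :=
  [/\ (xi *m phi = 0 /\ (forall X, etaf (X *m phi) = 0)),
      (etaf xi = 1 /\ (forall X, X *m phi *m phi = X - etaf X *: xi)),
      (\rank (eigenspace phi 1) = n /\ \rank (eigenspace phi (- 1)) = n),
      (g^T = g /\ g \in unitmx) &
      (forall X Y, bil (X *m phi) (Y *m phi) = - bil X Y + etaf X * etaf Y)].

(* e is a basis of D = ker eta, and c i Y = Y^i are the coordinates:
   Y = Y^i e_i + eta(Y) xi *)
Definition is_D_basis (e : 'I_(n.*2) -> vecV R n)
    (c : 'I_(n.*2) -> vecV R n -> R) : Prop :=
  [/\ (forall i, etaf (e i) = 0),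
      (forall Y, Y = \sum_i c i Y *: e i + etaf Y *: xi) &
      (forall a : 'I_(n.*2) -> R, \sum_i a i *: e i = 0 -> forall i, a i = 0)].

Variables (e : 'I_(n.*2) -> vecV R n) (c : 'I_(n.*2) -> vecV R n -> R).

Definition tensor3 := vecV R n -> vecV R n -> vecV R n -> R.

Definition in_calF (F : tensor3) : Prop :=
  exists (Ae : 'I_(n.*2) -> endV R n) (Axi : endV R n),
  [/\ (forall X i j, bil (X *m Ae i) (e j) = - bil (X *m Ae j) (e i)),
      (forall X i, X *m (\sum_j c j (e i *m phi) *: Ae j)
                   = - (X *m Ae i *m phi) - bil (X *m Axi) (e i) *: xi),
      (forall X i, etaf (X *m Ae i) = - bil (X *m Axi) (e i *m phi)),
      (forall X, etaf (X *m Axi) = 0) &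
      (forall X Y Z, F X Y Z = \sum_i c i Y * bil (X *m Ae i) Z
                               + etaf Y * bil (X *m Axi) (Z *m phi))].

Definition p2 (F : tensor3) : tensor3 := fun X Y Z =>
  - etaf Y * F (hproj X) (hproj Z) xi + etaf Z * F (hproj X) (hproj Y) xi.

Definition in_W2 (F : tensor3) : Prop :=
  in_calF F /\ forall X Y Z, F X Y Z = p2 F X Y Z.

Definition assoc_op (F : tensor3) (A : endV R n) : Prop :=
  (forall X, etaf (X *m A) = 0) /\
  (forall X Z, bil (X *m A) (Z *m phi) = F X xi Z).

Definition q1 (A : endV R n) : tensor3 := fun X Y Z =>
  - 2^-1 * etaf Y * (bil (X *m A *m phi) Z + bil (X *m phi *m A) Z)
  + 2^-1 * etaf Z * (bil (X *m A *m phi) Y + bil (X *m phi *m A) Y).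

Definition q2 (A : endV R n) : tensor3 := fun X Y Z =>
  - 2^-1 * etaf Y * (bil (X *m A *m phi) Z - bil (X *m phi *m A) Z)
  + 2^-1 * etaf Z * (bil (X *m A *m phi) Y - bil (X *m phi *m A) Y).

End Defs.

(* Main.v *)
Require Import Defs.
From HB Require Import structures.
From mathcomp Require Import all_boot all_order all_algebra.
From mathcomp Require Import reals.
From mathcomp Require Import ring lra.
Import Order.TTheory GRing.Theory Num.Theory.
Local Open Scope ring_scope.

Section L.
Variables (R : realType) (n : nat).
Implicit Types (X Y Z : 'rV[R]_(n.*2.+1)).
Variables (eta : 'cV[R]_(n.*2.+1)) (g : 'M[R]_(n.*2.+1)).

Lemma etafD X Y : etaf eta (X + Y) = etaf eta X + etaf eta Y.
Proof. by rewrite /etaf mulmxDl !mxE. Qed.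
Lemma etafB X Y : etaf eta (X - Y) = etaf eta X - etaf eta Y.
Proof. by rewrite /etaf mulmxBl !mxE. Qed.
Lemma etafZ a X : etaf eta (a *: X) = a * etaf eta X.
Proof. by rewrite /etaf -scalemxAl !mxE. Qed.
Lemma etaf0 : etaf eta 0 = 0.
Proof. by rewrite /etaf mul0mx !mxE. Qed.
Lemma bilDl X Y Z : bil g (X + Y) Z = bil g X Z + bil g Y Z.
Proof. by rewrite /bil !mulmxDl !mxE. Qed.
Lemma bilBl X Y Z : bil g (X - Y) Z = bil g X Z - bil g Y Z.
Proof. by rewrite /bil !mulmxBl !mxE. Qed.
Lemma bilBr X Y Z : bil g X (Y - Z) = bil g X Y - bil g X Z.
Proof. by rewrite /bil linearB /= mulmxBr !mxE. Qed.
Lemma bilZr a X Y : bil g X (a *: Y) = a * bil g X Y.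
Proof. by rewrite /bil linearZ /= -scalemxAr !mxE. Qed.
Lemma bilNl X Y : bil g (- X) Y = - bil g X Y.
Proof. by rewrite /bil !mulNmx !mxE. Qed.
Lemma bil0r X : bil g X 0 = 0.
Proof. by rewrite /bil linear0 mulmx0 !mxE. Qed.

Lemma nondeg D : g \in unitmx -> (forall Z, bil g D Z = 0) -> D = 0.
Proof.
move=> gu H.
have Dg : D *m g = 0.
  apply/matrixP=> i j; rewrite ord1.
  have := H (delta_mx 0 j); rewrite /bil trmx_delta -colE mxE => ->.
  by rewrite mxE.
by rewrite -(mulmxK gu D) Dg mul0mx.
Qed.
End L.

Theorem proposition4p2 (R : realType) (n : nat)
    (phi : 'M[R]_(n.*2.+1)) (xi : 'rV[R]_(n.*2.+1)) (eta : 'cV[R]_(n.*2.+1))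
    (g : 'M[R]_(n.*2.+1))
    (e : 'I_(n.*2) -> 'rV[R]_(n.*2.+1))
    (c : 'I_(n.*2) -> 'rV[R]_(n.*2.+1) -> R)
    (F : 'rV[R]_(n.*2.+1) -> 'rV[R]_(n.*2.+1) -> 'rV[R]_(n.*2.+1) -> R)
    (A : 'M[R]_(n.*2.+1)) :
  is_structure phi xi eta g ->
  is_D_basis xi eta e c ->
  in_W2 phi xi eta g e c F ->
  assoc_op phi xi eta g F A ->
  [/\ (forall X Y Z, F X Y Z = q1 phi eta g A X Y Z)
        <-> (forall X : 'rV[R]_(n.*2.+1), X *m phi *m A = X *m A *m phi),
      (forall X Y Z, F X Y Z = q1 phi eta g A X Y Z)
        <-> (forall X Y Z, F X Y Z = - F (X *m phi) (Y *m phi) Z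
                                     - F (X *m phi) Y (Z *m phi)),
      (forall X Y Z, F X Y Z = q2 phi eta g A X Y Z)
        <-> (forall X : 'rV[R]_(n.*2.+1), X *m phi *m A = - (X *m A *m phi)) &
      (forall X Y Z, F X Y Z = q2 phi eta g A X Y Z)
        <-> (forall X Y Z, F X Y Z = F (X *m phi) (Y *m phi) Z
                                     + F (X *m phi) Y (Z *m phi))].
Proof.
move=> [[xphi etaphi] [etaxi phi2] _ [gT gu] compat] [e0 decomp indep]
  [[Ae [Axi [_ _ _ _ Fform]]] W2] [etaA assoc].
have bilxi : forall X, bil g X xi = etaf eta X.
  move=> X; have := compat X xi; rewrite xphi bil0r etaxi mulr1 => H; lra.
have c0 : forall i, c i 0 = 0.
  have := decomp 0; rewrite etaf0 scale0r addr0 => h; apply: indep; by rewrite -h.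
have F0 : forall X Z, F X 0 Z = 0.
  move=> X Z; rewrite Fform etaf0 mul0r addr0; apply: big1 => i _; by rewrite c0 mul0r.
have hxi : hproj xi eta xi = 0 by rewrite /hproj etaxi scale1r subrr.
have Fxi : forall X Z, F X xi Z = - F (hproj xi eta X) (hproj xi eta Z) xi.
  move=> X Z; rewrite W2 /p2 hxi F0 etaxi; lra.
have KF0 : forall X Y Z, F X Y Z = etaf eta Y * F X xi Z - etaf eta Z * F X xi Y.
  move=> X Y Z; rewrite W2 /p2 !Fxi; lra.
have aux : forall X Z, bil g (X *m A) (Z *m phi) = - bil g (X *m A *m phi) Z.
  move=> X Z; have := compat (X *m A) (Z *m phi).
  rewrite phi2 bilBr bilZr bilxi etaphi etaA mul0r mulr0 subr0 => H; lra.
have KF : forall X Y Z, F X Y Z = - etaf eta Y * bil g (X *m A *m phi) Z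
                                  + etaf eta Z * bil g (X *m A *m phi) Y.
  move=> X Y Z; rewrite KF0 -!assoc !aux; lra.
have core : forall D, etaf eta D = 0 ->
    (forall Y Z, etaf eta Y * bil g D Z = etaf eta Z * bil g D Y) -> D = 0.
  move=> D eD H; apply: (@nondeg _ _ g D gu) => Z; have := H xi Z.
  by rewrite etaxi mul1r bilxi eD mulr0.
have bilphi : forall W Y, etaf eta W = 0 ->
    bil g (W *m phi) (Y *m phi) = - bil g W Y.
  by move=> W Y h; rewrite compat h mul0r addr0.
have Q1 : forall X, (X *m phi *m A = X *m A *m phi) <->
    (forall Y Z, etaf eta Y * bil g (X *m phi *m A - X *m A *m phi) Z
                 = etaf eta Z * bil g (X *m phi *m A - X *m A *m phi) Y).
  move=> X; split.
    by move=> ->; rewrite subrr => Y Z; rewrite /bil !mul0mx !mxE !mulr0.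
  move=> H; apply/eqP; rewrite -subr_eq0; apply/eqP; apply: core => //.
  by rewrite etafB etaphi etaA subr0.
have Q2 : forall X, (X *m phi *m A = - (X *m A *m phi)) <->
    (forall Y Z, etaf eta Y * bil g (X *m phi *m A + X *m A *m phi) Z
                 = etaf eta Z * bil g (X *m phi *m A + X *m A *m phi) Y).
  move=> X; split.
    by move=> ->; rewrite addNr => Y Z; rewrite /bil !mul0mx !mxE !mulr0.
  move=> H; apply/eqP; rewrite -addr_eq0; apply/eqP; apply: core => //.
  by rewrite etafD etaphi etaA addr0.
have bp := fun X Y => bilphi (X *m phi *m A) Y (etaA _).
have i1 : (forall X Y Z, F X Y Z = q1 phi eta g A X Y Z)
        <-> (forall X : 'rV[R]_(n.*2.+1), X *m phi *m A = X *m A *m phi).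
  split.
  + move=> H X; apply/Q1 => Y Z; have := H X Y Z; rewrite KF /q1 !bilBl; lra.
  + move=> H X Y Z; rewrite KF /q1 H; lra.
have i3 : (forall X Y Z, F X Y Z = q2 phi eta g A X Y Z)
        <-> (forall X : 'rV[R]_(n.*2.+1), X *m phi *m A = - (X *m A *m phi)).
  split.
  + move=> H X; apply/Q2 => Y Z; have := H X Y Z; rewrite KF /q2 !bilDl; lra.
  + move=> H X Y Z; rewrite KF /q2 H !bilNl; lra.
split => //.
- rewrite i1; split.
  + move=> H X Y Z; rewrite !KF !etaphi !bp H; lra.
  + move=> H X; apply/Q1 => Y Z; have := H X Y Z; rewrite !KF !etaphi !bp !bilBl; lra.
- rewrite i3; split.
  + move=> H X Y Z; rewrite !KF !etaphi !bp H !bilNl; lra.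
  + move=> H X; apply/Q2 => Y Z; have := H X Y Z; rewrite !KF !etaphi !bp !bilDl; lra.
Qed.
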